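(* Let $(A,\leq,\cdot,/)$ be a narhoop and $\theta$ a unital congruence on $(A,\cdot,/)$. Then: (1) $N_\theta$ is closed under $\cdot$ and $/$ (i.e. is a subnarhoop of $A$); (2) for all $x,y\in A$, if $x\leq y$ and $x\in N_\theta$ then $y\in N_\theta$; (3) $\phi(N_\theta)\subseteq N_\theta$ for every $\phi\in\mathrm{Inn}(A)$.
   Context: Write $xy$ for $x\cdot y$; $\cdot$ binds more strongly than $/$, and $/$ binds more strongly than $\sqcap$, where $x\sqcap y := (x/y)y$. A right-residuated magma is a structure $(A,\leq,\cdot,/)$ where $(A,\leq)$ is a poset and $xy\leq z\iff x\leq z/y$ for all $x,y,z\in A$. A narhoop is a right-residuated magma such that for all $x,y$: $x\leq y\iff x\sqcap y = x = y\sqcap x$. A congruence $\theta$ on $(A,\cdot,/)$ is unital if $x/x\mathrel{\theta} y/y$ for all $x,y\in A$. For a unital congruence $\theta$, $N_\theta=\{x\in A\mid x\mathrel{\theta} y/y \text{ for some (equivalently, all) } y\in A\}$. For $x,y\in A$ define maps $A\to A$ by $\phi_{1,x,y}(z)=((zx)y)/(xy)$, $\phi_{2,x,y}(z)=((zx)/y)/(x/y)$, $\phi_{3,x,y}(z)=(x(zy))/(xy)$, $\phi_{4,x,y}(z)=(x/(zy))/(x/y)$, $\phi_{5,x,y}(z)=(xy)/(x(zy))$, $\phi_{6,x,y}(z)=(x/y)/(x/(zy))$. $\mathrm{Inn}(A)$ is the semigroup of maps $A\to A$ under composition generated by all $\phi_{i,x,y}$, $i=1,\dots,6$, $x,y\in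 A$. *)

(* Defs.v *)
From Stdlib Require Import RelationClasses.

Record RRMagma := {
  carrier :> Type;
  le : carrier -> carrier -> Prop;
  mul : carrier -> carrier -> carrier;
  rdiv : carrier -> carrier -> carrier;
  le_refl : forall x, le x x;
  le_antisym : forall x y, le x y -> le y x -> x = y;
  le_trans : forall x y z, le x y -> le y z -> le x z;
  residuation : forall x y z, le (mul x y) z <-> le x (rdiv z y)
}.

Arguments le {r}.
Arguments mul {r}.
Arguments rdiv {r}.

Definition rmeet {A : RRMagma} (x y : A) : A := mul (rdiv x y) y.

Definition narhoop (A : RRMagma) : Prop :=
  forall x y : A, le x y <-> (rmeet x y = x /\ x = rmeet y x).

Definition congruence {A : RRMagma} (th : A -> A -> Prop) : Prop :=
  Equivalence th /\
  (forall x x' y y', th x x' -> th y y' -> th (mul x y) (mul x' y')) /\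
  (forall x x' y y', th x x' -> th y y' -> th (rdiv x y) (rdiv x' y')).

Definition unital {A : RRMagma} (th : A -> A -> Prop) : Prop :=
  forall x y : A, th (rdiv x x) (rdiv y y).

Definition Ntheta {A : RRMagma} (th : A -> A -> Prop) (x : A) : Prop :=
  exists y : A, th x (rdiv y y).

Definition phi1 {A : RRMagma} (x y : A) : A -> A :=
  fun z => rdiv (mul (mul z x) y) (mul x y).
Definition phi2 {A : RRMagma} (x y : A) : A -> A :=
  fun z => rdiv (rdiv (mul z x) y) (rdiv x y).
Definition phi3 {A : RRMagma} (x y : A) : A -> A :=
  fun z => rdiv (mul x (mul z y)) (mul x y).
Definition phi4 {A : RRMagma} (x y : A) : A -> A :=
  fun z => rdiv (rdiv x (mul z y)) (rdiv x y).
Definition phi5 {A : RRMagma} (x y : A) : A -> A :=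
  fun z => rdiv (mul x y) (mul x (mul z y)).
Definition phi6 {A : RRMagma} (x y : A) : A -> A :=
  fun z => rdiv (rdiv x y) (rdiv x (mul z y)).

Inductive Inn {A : RRMagma} : (A -> A) -> Prop :=
| Inn_phi1 : forall x y, Inn (phi1 x y)
| Inn_phi2 : forall x y, Inn (phi2 x y)
| Inn_phi3 : forall x y, Inn (phi3 x y)
| Inn_phi4 : forall x y, Inn (phi4 x y)
| Inn_phi5 : forall x y, Inn (phi5 x y)
| Inn_phi6 : forall x y, Inn (phi6 x y)
| Inn_comp : forall f g, Inn f -> Inn g -> Inn (fun z => f (g z)).

(* Main.v *)
Require Import Defs.
From Stdlib Require Import RelationClasses Setoid.

Lemma meet_self (A : RRMagma) (hA : narhoop A) (a : A) : mul (rdiv a a) a = a.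
Proof. destruct (proj1 (hA a a) (le_refl A a)) as [H _]. exact H. Qed.

Lemma mono_mul (A : RRMagma) (a b c : A) : le a b -> le (mul a c) (mul b c).
Proof.
  intro H. apply (proj2 (residuation A _ _ _)).
  apply le_trans with b; auto.
  apply (proj1 (residuation A _ _ _)). apply le_refl.
Qed.

Lemma mono_div (A : RRMagma) (a b c : A) : le a b -> le (rdiv a c) (rdiv b c).
Proof.
  intro H. apply (proj1 (residuation A _ _ _)).
  apply le_trans with a; auto.
  apply (proj2 (residuation A _ _ _)). apply le_refl.
Qed.

Lemma divL (A : RRMagma) (hA : narhoop A) (a c : A) : le a c -> rdiv c a = rdiv a a.
Proof.
  intro H. destruct (proj1 (hA a c) H) as [_ H2].
  apply le_antisym.
  - apply (proj1 (residuation A _ _ _)). unfold rmeet in H2. rewrite <- H2. apply le_refl.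
  - apply mono_div. exact H.
Qed.

Theorem mainTheorem12 (A : RRMagma) (hA : narhoop A)
  (th : A -> A -> Prop) (hcong : congruence th) (hunit : unital th) :
  (forall x y : A, Ntheta th x -> Ntheta th y ->
     Ntheta th (mul x y) /\ Ntheta th (rdiv x y)) /\
  (forall x y : A, le x y -> Ntheta th x -> Ntheta th y) /\
  (forall phi : A -> A, Inn phi -> forall z : A, Ntheta th z -> Ntheta th (phi z)).
Proof.
  destruct hcong as [Heq [Hm Hd]].
  assert (rf : forall a, th a a) by (intro; apply (@Equivalence_Reflexive _ _ Heq)).
  assert (sy : forall a b, th a b -> th b a) by (intros; apply (@Equivalence_Symmetric _ _ Heq); auto).
  assert (tr : forall a b c, th a b -> th b c -> th a c)
    by (intros; eapply (@Equivalence_Transitive _ _ Heq); eauto).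
  assert (Eleft : forall u a, th (mul (rdiv u u) a) a).
  { intros u a. eapply tr. apply Hm. apply hunit. apply rf. rewrite meet_self; auto. }
  assert (NE : forall z u, Ntheta th z -> th z (rdiv u u)).
  { intros z u [w Hw]. eapply tr. exact Hw. apply hunit. }
  split; [|split].
  - intros x y Hx Hy. split.
    + exists x. apply NE with (u := x) in Hx. apply NE with (u := x) in Hy.
      eapply tr. apply Hm; eassumption. apply Eleft.
    + exists (rdiv x x). apply NE with (u := x) in Hx. apply NE with (u := x) in Hy.
      apply Hd; assumption.
  - intros x y Hxy Hx.
    set (w := mul y x).
    assert (Hxx : th (mul x x) x).
    { pose proof (NE x x Hx) as H. eapply tr. apply Hm. exact H. apply rf. apply Eleft. }
    assert (H1 : rdiv w (mul x x) = rdiv (mul x x) (mul x x)).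
    { apply divL; auto. apply mono_mul. exact Hxy. }
    set (c := rdiv w x).
    assert (Hyc : le y c).
    { apply (proj1 (residuation A _ _ _)). apply le_refl. }
    destruct (proj1 (hA y c) Hyc) as [H2 _]. unfold rmeet in H2.
    assert (H3 : rdiv y x = rdiv x x) by (apply divL; auto).
    assert (Hc : th c (rdiv x x)).
    { eapply tr. unfold c. apply Hd. apply rf. apply sy. exact Hxx.
      rewrite H1. apply hunit. }
    exists x. rewrite <- H2 at 1.
    apply tr with (mul (rdiv y x) (rdiv x x)).
    apply Hm. apply Hd. apply rf. apply tr with (rdiv x x). exact Hc. apply sy, NE; exact Hx. exact Hc.
    rewrite H3. apply Eleft.
  - intros phi Hphi. induction Hphi; intros z Hz;
      try (apply IHHphi1; apply IHHphi2; exact Hz);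
      pose proof (NE z x Hz) as H; eexists.
    + unfold phi1. apply Hd; [|apply rf].
      eapply tr. apply Hm. apply Hm. exact H. apply rf. apply rf. apply Hm. apply Eleft. apply rf.
    + unfold phi2. apply Hd; [|apply rf].
      apply Hd; [|apply rf]. eapply tr. apply Hm. exact H. apply rf. apply Eleft.
    + unfold phi3. apply Hd; [|apply rf].
      apply Hm. apply rf. eapply tr. apply Hm. exact H. apply rf. apply Eleft.
    + unfold phi4. apply Hd; [|apply rf].
      apply Hd. apply rf. eapply tr. apply Hm. exact H. apply rf. apply Eleft.
    + unfold phi5. apply Hd; [apply rf|].
      apply Hm. apply rf. eapply tr. apply Hm. exact H. apply rf. apply Eleft.
    + unfold phi6. apply Hd; [apply rf|].
      apply Hd. apply rf. eapply tr. apply Hm. exact H. apply rf. apply Eleft.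
Qed.
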